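(* Let $q\ge1$, $N=2^q$, and let $B^{(1)}=(b_{i,j})_{i,j=1}^{N-1}$ be the symmetric Toeplitz matrix with $b_{i,i}=\frac{2N}3-1$, $b_{i,j}=\frac N6-1$ if $|i-j|=1$, and $b_{i,j}=-1$ if $|i-j|\ge2$. For $k=2,\dots,q$ define $B^{(k)}=R_kB^{(k-1)}R_k^T$, where $R_k:\mathbb R^{N/2^{k-2}-1}\to\mathbb R^{N/2^{k-1}-1}$ is $(R_k\nu)_i=\nu_{2i-1}+2\nu_{2i}+\nu_{2i+1}$. Let $L_{N/2^{k-1}-1}=\mathrm{tridiag}(-1,2,-1)$ be the one-dimensional discrete Laplacian of size $(N/2^{k-1}-1)\times(N/2^{k-1}-1)$. Then for every $1\le k\le q$ the matrix $$H^{(k)}:=B^{(k)}-\frac{2^{3k-5}}{3}N\,L_{N/2^{k-1}-1}$$ is positive semi-definite. *)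

(* Defs.v *)
From HB Require Import structures.
From mathcomp Require Import all_boot all_order all_algebra.
From mathcomp Require Import reals.
Set Implicit Arguments. Unset Strict Implicit. Unset Printing Implicit Defensive.
Import Order.TTheory GRing.Theory Num.Theory.
Local Open Scope ring_scope.

(* All matrix indices are 0-based (paper's index i corresponds to i-1 here). *)

Definition psd (R : realType) (n : nat) (A : 'M[R]_n) : Prop :=
  A^T = A /\ forall v : 'cV[R]_n, 0 <= (v^T *m A *m v) ord0 ord0.

Definition Bone (R : realType) (N n : nat) : 'M[R]_n :=
  \matrix_(i < n, j < n)
    (if (i : nat) == j then 2 * N%:R / 3 - 1
     else if ((i : nat) == j.+1) || ((j : nat) == i.+1) then N%:R / 6 - 1
     else -1).

(* Restriction R_k : R^n -> R^m, (R v)_i = v_{2i-1} + 2 v_{2i} + v_{2i+1}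
   (1-based), i.e. with 0-based indices (R v)_i = v_{2i} + 2 v_{2i+1} + v_{2i+2}. *)
Definition restr (R : realType) (m n : nat) : 'M[R]_(m, n) :=
  \matrix_(i < m, j < n)
    (if (j : nat) == i.*2 then 1
     else if (j : nat) == i.*2.+1 then 2
     else if (j : nat) == i.*2.+2 then 1
     else 0).

Definition lap1 (R : realType) (n : nat) : 'M[R]_n :=
  \matrix_(i < n, j < n)
    (if (i : nat) == j then 2
     else if ((i : nat) == j.+1) || ((j : nat) == i.+1) then -1
     else 0).

Definition dimB (N j : nat) : nat := N %/ 2 ^ j - 1.

(* Bmat N j = B^(j+1) (shifted index so that B^(1) is the base case). *)
Fixpoint Bmat (R : realType) (N j : nat) : 'M[R]_(dimB N j) :=
  match j with
  | 0 => Bone R N (dimB N 0)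
  | j'.+1 => restr R (dimB N j'.+1) (dimB N j') *m Bmat R N j'
               *m (restr R (dimB N j'.+1) (dimB N j'))^T
  end.

Definition Hmat (R : realType) (N k : nat) : 'M[R]_(dimB N k.-1) :=
  Bmat R N k.-1 -
  (((2 : R) ^ ((3 * k)%:Z - 5)) / 3 * N%:R) *: lap1 R (dimB N k.-1).

(* Main.v *)
Require Import Defs.
From HB Require Import structures.
From mathcomp Require Import all_boot all_order all_algebra.
From mathcomp Require Import reals.
From mathcomp Require Import zify ring lra.
Import Order.TTheory GRing.Theory Num.Theory.
Local Open Scope ring_scope.
Set Warnings "-notation-overridden -ambiguous-paths".

Ltac splitif := repeat (case: ifP => ?; try (exfalso; lia)).

Section S.
Variable R : realType.

Definition t3 (p r s : R) (i j : nat) : R :=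
  if i == j then p else if (i == j.+1) || (j == i.+1) then r else s.
Definition toep n (p r s : R) : 'M[R]_n := \matrix_(i < n, j < n) t3 p r s i j.


Lemma sum_if (n k : nat) (F : nat -> R) :
  \sum_(i < n) (if (i : nat) == k then F i else 0) = if (k < n)%N then F k else 0.
Proof.
elim: n => [|n IH]; first by rewrite big_ord0.
rewrite big_ord_recr /= IH.
splitif; rewrite ?addr0 ?add0r //.
have -> : k = n by lia.
by [].
Qed.

Lemma sum_restr (c f : nat) (a : 'I_c) (F : nat -> R) : f = c.*2.+1 ->
  \sum_(x < f) restr R c f a x * F x = F a.*2 + 2 * F a.*2.+1 + F a.*2.+2.
Proof.
move=> Hf.
have Ha := ltn_ord a.
transitivity (\sum_(x < f) ((if (x:nat) == a.*2 then F x else 0) +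
   (if (x:nat) == a.*2.+1 then 2 * F x else 0) + (if (x:nat) == a.*2.+2 then F x else 0))).
  apply: eq_bigr => x _; rewrite mxE; splitif; rewrite ?mul1r ?mul0r ?addr0 ?add0r //.
  all: try by rewrite mulrC.
rewrite !big_split /= !sum_if.
rewrite (sum_if _ _ (fun i => 2 * F i)); by splitif.
Qed.


Lemma restr_toep c f p r s : f = c.*2.+1 ->
  restr R c f *m toep f p r s *m (restr R c f)^T =
  toep c (6 * p + 8 * r + 2 * s) (p + 4 * r + 11 * s) (16 * s).
Proof.
move=> Hf; apply/matrixP => a b.
transitivity (\sum_(j<f) restr R c f b j * (\sum_(i<f) restr R c f a i * t3 p r s i j)).
  rewrite mxE; apply eq_bigr => j _; rewrite mulrC; congr (_ * _); first by rewrite mxE.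
  rewrite mxE; apply eq_bigr => i _; congr (_ * _); by rewrite mxE.
rewrite (eq_bigr (fun j : 'I_f => restr R c f b j * (t3 p r s a.*2 j + 2 * t3 p r s a.*2.+1 j + t3 p r s a.*2.+2 j))); last first.
  by move=> j _; rewrite (sum_restr _ _ _ (fun i => t3 p r s i j)).
rewrite (sum_restr _ _ _ (fun j => t3 p r s a.*2 j + 2 * t3 p r s a.*2.+1 j + t3 p r s a.*2.+2 j)) //.
rewrite mxE /t3; splitif; lra.
Qed.

End S.

Section S2.
Variable R : realType.

Lemma cs m (w : 'I_m -> R) : (\sum_i w i)^+2 <= m%:R * \sum_i w i ^+ 2.
Proof.
case: m w => [|m] w; first by rewrite !big_ord0 mul0r expr2 mul0r.
set W := \sum_i w i; set Z := \sum_i w i ^+ 2. set mu := W / m.+1%:R.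
have H: 0 <= \sum_i (w i - mu)^+2 by apply: sumr_ge0 => i _; exact: sqr_ge0.
have E: \sum_i (w i - mu)^+2 = Z - 2 * mu * W + m.+1%:R * mu^+2.
  rewrite (eq_bigr (fun i => w i ^+ 2 + ((- (2 * mu)) * w i + mu ^+ 2))); last by move=> i _; ring.
  rewrite big_split big_split /= -mulr_sumr sumr_const card_ord -/Z -/W mulr_natl.
  ring.
have E2 : m.+1%:R * Z - W^+2 = m.+1%:R * \sum_i (w i - mu)^+2.
  rewrite E /mu; field.
  apply/negP => /eqP H0; have : (0 <= m%:R :> R) := ler0n _ _; lra.
have : 0 <= m.+1%:R * Z - W^+2 by rewrite E2; apply: mulr_ge0.
lra.
Qed.

Definition wf n (u : nat -> R) (j : nat) :=
  (if (j < n)%N then u j else 0) + (if (0 < j)%N then u j.-1 else 0).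

Lemma quad2 n (u : nat -> R) :
 \sum_(j < n) (\sum_(i < n) u i * t3 R 2 1 0 i j) * u j = \sum_(j < n.+1) (wf n u j)^+2.
Proof.
have step1 : forall j : 'I_n, \sum_(i < n) u i * t3 R 2 1 0 i j =
   2 * u j + (if (j.+1 < n)%N then u j.+1 else 0) + (if (0 < j)%N then u j.-1 else 0).
  move=> j.
  rewrite (eq_bigr (fun i : 'I_n => (if (i:nat) == j then 2 * u i else 0) + (if (i:nat) == j.+1 then u i else 0)
     + (if (i:nat) == j.-1 then (if (0 < j)%N then u i else 0) else 0))); last first.
    move=> i _; rewrite /t3; splitif; ring.
  rewrite !big_split /= (sum_if _ _ _ (fun i => 2 * u i)) (sum_if _ _ _ u)
     (sum_if _ _ _ (fun i => if (0 < j)%N then u i else 0)).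
  move: (ltn_ord j) => Hj; rewrite Hj; splitif => //.
rewrite (eq_bigr (fun j : 'I_n => 2 * u j ^+ 2 + ((if (j.+1 < n)%N then u j.+1 else 0) * u j + (if (0 < j)%N then u j.-1 else 0) * u j))); last by move=> j _; rewrite step1; ring.
rewrite !big_split /= -mulr_sumr.
have shift : \sum_(j < n) (if (j.+1 < n)%N then u j.+1 else 0) * u j = \sum_(j < n) (if (0 < j)%N then u j.-1 else 0) * u j.
  case: n {step1} => [|n]; first by rewrite !big_ord0.
  rewrite big_ord_recr big_ord_recl /= ltnn mul0r addr0 mul0r add0r.
  apply: eq_bigr => j _.
  by rewrite add0n /bump leq0n add1n ltnS ltn_ord mulrC.
rewrite shift.
rewrite (eq_bigr (fun j : 'I_n.+1 => (if (j<n)%N then u j ^+2 else 0) + ((if (0<j)%N then u j.-1 ^+2 else 0) + 2 * ((if (0<j)%N then u j.-1 else 0) * (if (j<n)%N then u j else 0))))); last by move=> j _; rewrite /wf; splitif; ring.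
rewrite !big_split /=.
rewrite big_ord_recr /= ltnn addr0.
rewrite [in RHS]big_ord_recl [in RHS]big_ord_recr /= ltnn !mulr0 addr0 add0r.
have F1 : \sum_(i<n) (if (i < n)%N then u i^+2 else 0) = \sum_(i < n) u i^+2.
  by apply eq_bigr => i _; rewrite ltn_ord.
have F2 : \sum_(i<n) u (0 + i)%N ^+2 = \sum_(i < n) u i^+2.
  by apply eq_bigr => i _; rewrite add0n.
have F3 : \sum_(i<n) 2 * ((if (0 < i)%N then u i.-1 else 0) * (if (i < n)%N then u i else 0))
   = 2 * \sum_(i<n) (if (0 < i)%N then u i.-1 else 0) * u i.
  by rewrite mulr_sumr; apply eq_bigr => i _; rewrite ltn_ord.
rewrite F1 F2 F3; ring.
Qed.


Lemma sum_wf n (u : nat -> R) : \sum_(j < n.+1) wf n u j = 2 * \sum_(j<n) u j.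
Proof.
rewrite /wf big_split /= big_ord_recr [in X in _ + X]big_ord_recl /= ltnn addr0 add0r.
have F1 : \sum_(i<n) (if (i < n)%N then u i else 0) = \sum_(i < n) u i.
  by apply eq_bigr => i _; rewrite ltn_ord.
have F2 : \sum_(i<n) u (0 + i)%N = \sum_(i < n) u i.
  by apply eq_bigr => i _; rewrite add0n.
rewrite F1 F2; ring.
Qed.

Lemma quad n (a b : R) : 0 <= b -> 4 * a = n.+1%:R * b -> forall v : 'cV[R]_n,
  0 <= (v^T *m toep R n (2 * a - b) (a - b) (- b) *m v) 0 0.
Proof.
move=> hb ha v.
pose u (k : nat) : R := match (insub k : option 'I_n) with Some i => v i 0 | None => 0 end.
have Hv : forall i : 'I_n, v i 0 = u i by move=> i; rewrite /u valK.
have E : (v^T *m toep R n (2 * a - b) (a - b) (- b) *m v) 0 0 =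
   \sum_(j<n) (\sum_(i<n) u i * (a * t3 R 2 1 0 i j - b)) * u j.
  rewrite mxE; apply eq_bigr => j _; rewrite [v j 0]Hv mxE; congr (_ * _).
  apply eq_bigr => i _; rewrite !mxE Hv /t3; splitif; ring.
have E2 : \sum_(j<n) (\sum_(i<n) u i * (a * t3 R 2 1 0 i j - b)) * u j =
   a * (\sum_(j<n) (\sum_(i<n) u i * t3 R 2 1 0 i j) * u j) - b * (\sum_(i<n) u i)^+2.
  transitivity (\sum_(j<n) (a * ((\sum_(i<n) u i * t3 R 2 1 0 i j) * u j) - b * (u j * \sum_(i<n) u i))).
    apply eq_bigr => j _.
    have -> : \sum_(i<n) u i * (a * t3 R 2 1 0 i j - b) = a * \sum_(i<n) u i * t3 R 2 1 0 i j - b * \sum_(i<n) u i.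
      by rewrite 2!mulr_sumr -sumrB; apply eq_bigr => i _; ring.
    ring.
  by rewrite sumrB -!mulr_sumr -mulr_suml expr2.
rewrite E E2 quad2.
have hcs := cs _ (fun j : 'I_n.+1 => wf n u j).
rewrite sum_wf in hcs.
set Z := \sum_(j < n.+1) wf n u j ^+ 2 in hcs *.
set S := \sum_(i < n) u i in hcs *.
have -> : a = n.+1%:R * b / 4 by lra.
have key : 0 <= b * (n.+1%:R * Z - (2 * S)^+2) by apply: mulr_ge0 => //; rewrite subr_ge0.
have -> : n.+1%:R * b / 4 * Z - b * S ^+ 2 = b * (n.+1%:R * Z - (2 * S)^+2) / 4 by field.
by apply: divr_ge0.
Qed.
End S2.

Section S3.
Variable R : realType.

Lemma toep_tr n (p r s : R) : (toep R n p r s)^T = toep R n p r s.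
Proof. apply/matrixP => i j; rewrite !mxE /t3; splitif => //. Qed.

Lemma toep_sub n (p r s p' r' s' c : R) :
  toep R n p r s - c *: toep R n p' r' s' = toep R n (p - c * p') (r - c * r') (s - c * s').
Proof. apply/matrixP => i j; rewrite !mxE /t3; splitif => //. Qed.

Lemma dimB_eq q j : (j <= q)%N -> dimB (2^q) j = (2^(q-j) - 1)%N.
Proof.
move=> H; rewrite /dimB.
have -> : (2^q = 2^(q-j) * 2^j)%N by rewrite -expnD subnK.
by rewrite mulnK // expn_gt0.
Qed.

Lemma dimB_S q j : (j < q)%N -> dimB (2^q) j = (dimB (2^q) j.+1).*2.+1.
Proof.
move=> H; rewrite !dimB_eq // ?(ltnW H) //.
have -> : (q - j = (q - j.+1).+1)%N by lia.
rewrite expnS.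
have : (0 < 2^(q - j.+1))%N by rewrite expn_gt0.
lia.
Qed.

Definition pB q j : R := 8 ^+ j * (2 * (2^q)%:R / 3) - 16 ^+ j.
Definition rB q j : R := 8 ^+ j * ((2^q)%:R / 6) - 16 ^+ j.
Definition sB j : R := - 16 ^+ j.

Lemma Bmat_eq q j : (j <= q)%N ->
  Bmat R (2^q) j = toep R (dimB (2^q) j) (pB q j) (rB q j) (sB j).
Proof.
elim: j => [_|j IH Hj] /=.
  by apply/matrixP => i k; rewrite !mxE /t3 /pB /rB /sB !expr0 !mul1r.
rewrite IH ?(ltnW Hj) // restr_toep; last exact: dimB_S.
by congr toep; rewrite /pB /rB /sB !exprS; field.
Qed.

Lemma coefE j : (2 : R) ^ ((3 * j.+1)%:Z - 5) = 8 ^+ j / 4.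
Proof.
have -> : ((3 * j.+1)%:Z - 5 = (3 * j)%:Z + (- 2%:Z))%R by lia.
rewrite exprzDr; last by rewrite unitfE pnatr_eq0.
rewrite -exprnP -exprnN exprM.
have -> : (2:R) ^+ 3 = 8 by rewrite !exprS expr0; ring.
have -> : (2:R) ^+ 2 = 4 by rewrite !exprS expr0; ring.
by [].
Qed.
End S3.

Theorem lemma4p7 (R : realType) (q k : nat) :
  (1 <= q)%N -> (1 <= k <= q)%N -> psd (Hmat R (2 ^ q) k).
Proof.
move=> hq /andP [hk1 hkq].
case: k hk1 hkq => [//|j] _ hj.
pose n := dimB (2^q) j.
have Hn : n.+1 = (2^(q-j))%N.
  by rewrite /n (@dimB_eq q j (ltnW hj)) subn1 prednK // expn_gt0.
pose b : R := 16 ^+ j.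
pose a : R := b * (2^(q-j))%:R / 4.
have HH : Hmat R (2^q) j.+1 = toep R n (2 * a - b) (a - b) (- b).
  rewrite /Hmat; change (j.+1.-1) with j.
  rewrite (@Bmat_eq R q j (ltnW hj)) coefE.
  have -> : lap1 R (dimB (2^q) j) = toep R _ 2 (-1) 0 by apply/matrixP => x y; rewrite !mxE.
  rewrite toep_sub /a /b /pB /rB /sB.
  have -> : ((2^q)%N%:R : R) = 2^+j * (2^(q-j))%:R.
    by rewrite -natrX -natrM -expnD subnKC // ltnW.
  have -> : (16:R)^+j = 8^+j * 2^+j by rewrite -exprMn; congr (_ ^+ _); ring.
  by congr toep; field.
rewrite HH; split; first exact: toep_tr.
apply: quad; first by rewrite /b exprn_ge0.
by rewrite /a Hn; field.
Qed.
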